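(* Let $n\ge 2$. Then (i) $\mathbf{E}(\mathbb{S}^n_\infty)\succeq\mathcal{F}(\mathbb{S}^n_\infty)\supsetneq\mathbb{D}^{n+1}_\infty$; (ii) $\mathbf{E}(\mathbb{D}^{n+1}_\infty)\succeq\mathcal{F}(\mathbb{D}^{n+1}_\infty)\supseteq\mathcal{F}(\mathbb{S}^n_\infty)\supsetneq\mathbb{D}^{n+1}_\infty$. As a consequence, $\mathbb{D}^{n+1}_\infty$ is not injective.
   Context: $\mathbb{R}^m_\infty$ denotes $\mathbb{R}^m$ with the metric $d_\infty$ induced by the $\ell^\infty$-norm. $\mathbb{S}^n_\infty=\{x\in\mathbb{R}^{n+1}:\|x\|_2=1\}$ and $\mathbb{D}^{n+1}_\infty=\{x\in\mathbb{R}^{n+1}:\|x\|_2\le1\}$, both with the metric $d_\infty$. For $1\le i\le m$, $\Lambda_i=\{x\in\mathbb{R}^m:x_i=\|x\|_\infty\}$, and for $p\in\mathbb{R}^m$, $\xi\in\{\pm1\}$, $p+\xi\Lambda_i=\{p+\xi z:z\in\Lambda_i\}$. For compact $X\subseteq\mathbb{R}^m_\infty$, a point $p\in\mathbb{R}^m$ is $X$-surrounding if $(p+\xi\Lambda_i)\cap X\ne\emptyset$ for all $i\in\{1,\dots,m\}$ and $\xi\in\{\pm1\}$; $\mathcal{F}(X)$ is the set of $X$-surrounding points with metric $d_\infty$. For a metric space $X$, $\Delta(X)=\{f:X\to\mathbb{R}\text{ bounded}: f(x)+f(x')\ge d_X(x,x')\}$ and the tight span $\mathbf{E}(X)$ is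 the set of pointwise-minimal elements of $\Delta(X)$ with the sup-norm metric. $A\succeq B$ means $B$ isometrically embeds into $A$. A metric space $E$ is injective if for every isometric embedding $X\hookrightarrow\tilde X$ and every 1-Lipschitz $f:X\to E$ there is a 1-Lipschitz $\tilde f:\tilde X\to E$ extending $f$. *)

(* Defs.v *)
From mathcomp Require Import all_boot.
From Stdlib Require Import Reals.

Set Implicit Arguments.
Unset Strict Implicit.

Local Open Scope R_scope.

Definition vec (m : nat) := 'I_m -> R.

Definition norm_inf (m : nat) (x : vec m) : R :=
  \big[Rmax/0]_(i < m) Rabs (x i).
Definition d_inf (m : nat) (x y : vec m) : R :=
  \big[Rmax/0]_(i < m) Rabs (x i - y i).

Definition sqnorm2 (m : nat) (x : vec m) : R :=
  \big[Rplus/0]_(i < m) (x i * x i).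
Definition sphere (m : nat) (x : vec m) : Prop := sqnorm2 x = 1.
Definition cball (m : nat) (x : vec m) : Prop := sqnorm2 x <= 1.

Record MetricSpace := MkMetric { carrier :> Type; dist : carrier -> carrier -> R }.

Definition is_metric (X : MetricSpace) : Prop :=
  (forall x y : X, 0 <= dist x y) /\
  (forall x y : X, dist x y = 0 <-> x = y) /\
  (forall x y : X, dist x y = dist y x) /\
  (forall x y z : X, dist x z <= dist x y + dist y z).

Definition subspace (m : nat) (P : vec m -> Prop) : MetricSpace :=
  @MkMetric {x : vec m | P x} (fun a b => d_inf (proj1_sig a) (proj1_sig b)).

Definition S_inf (n : nat) : MetricSpace := subspace (@sphere n.+1).
Definition D_inf (n : nat) : MetricSpace := subspace (@cball n.+1).

Definition Lambda (m : nat) (i : 'I_m) (z : vec m) : Prop := z i = norm_inf z.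
Definition sgnb (b : bool) : R := if b then 1 else -1.

Definition surrounding (m : nat) (X : vec m -> Prop) (p : vec m) : Prop :=
  forall (i : 'I_m) (xi : bool),
    exists z : vec m, Lambda i z /\ X (fun j => p j + sgnb xi * z j).

Definition F_space (m : nat) (X : vec m -> Prop) : MetricSpace :=
  subspace (surrounding X).

Definition subset_of (m : nat) (A B : vec m -> Prop) : Prop :=
  forall x, A x -> B x.
Definition strict_subset_of (m : nat) (A B : vec m -> Prop) : Prop :=
  subset_of A B /\ exists x, B x /\ ~ A x.

Definition in_Delta (X : MetricSpace) (f : X -> R) : Prop :=
  (exists M, forall x, Rabs (f x) <= M) /\
  (forall x x' : X, f x + f x' >= dist x x').

Definition in_tight_span (X : MetricSpace) (f : X -> R) : Prop :=
  in_Delta f /\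
  (forall g : X -> R, in_Delta g -> (forall x, g x <= f x) -> forall x, g x = f x).

Definition sup_dist_is (X : MetricSpace) (f g : X -> R) (r : R) : Prop :=
  is_lub (fun t => exists x, t = Rabs (f x - g x)) r.

(** E(X) >= Y : Y isometrically embeds into the tight span E(X)
    (with the sup-norm metric). *)
Definition embeds_in_tight_span (X Y : MetricSpace) : Prop :=
  exists phi : Y -> X -> R,
    (forall y, in_tight_span (phi y)) /\
    (forall y y', sup_dist_is (phi y) (phi y') (dist y y')).

Definition isometric (A B : MetricSpace) (e : A -> B) : Prop :=
  forall a a', dist (e a) (e a') = dist a a'.
Definition lipschitz1 (A B : MetricSpace) (f : A -> B) : Prop :=
  forall a a', dist (f a) (f a') <= dist a a'.

Definition injective_space (E : MetricSpace) : Prop :=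
  forall (X Xt : MetricSpace), is_metric X -> is_metric Xt ->
  forall e : X -> Xt, isometric e ->
  forall f : X -> E, lipschitz1 f ->
  exists ft : Xt -> E, lipschitz1 ft /\ forall x, ft (e x) = f x.

(* Main.v *)
From Stdlib Require Import Lra Classical FunctionalExtensionality.
From HB Require Import structures.
Require Import Defs.
From mathcomp Require Import all_boot.
From Stdlib Require Import Reals.

Local Open Scope R_scope.


HB.instance Definition _ := Monoid.isComLaw.Build R 0 Rplus
  (fun a b c => esym (Rplus_assoc a b c)) Rplus_comm Rplus_0_l.

Lemma bmax_le (I : Type) (s : seq I) (F : I -> R) M :
  0 <= M -> (forall i, F i <= M) -> \big[Rmax/0]_(i <- s) F i <= M.
Proof.
move=> H0 H; elim: s => [|a s IH]; first by rewrite big_nil.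
rewrite big_cons; apply Rmax_lub; auto.
Qed.

Lemma bmax_ge (I : eqType) (s : seq I) (F : I -> R) i :
  i \in s -> F i <= \big[Rmax/0]_(j <- s) F j.
Proof.
elim: s => // a s IH; rewrite in_cons big_cons => /orP [/eqP ->|H].
  by apply Rmax_l.
eapply Rle_trans; [apply IH, H | apply Rmax_r].
Qed.

Lemma bmax_ge0 (I : Type) (s : seq I) (F : I -> R) :
  0 <= \big[Rmax/0]_(j <- s) F j.
Proof.
elim: s => [|a s IH]; first by rewrite big_nil; apply Rle_refl.
rewrite big_cons; eapply Rle_trans; [apply IH | apply Rmax_r].
Qed.

Lemma bmax_arg (I : eqType) (s : seq I) (F : I -> R) :
  (forall i, 0 <= F i) -> s <> [::] ->
  exists i, i \in s /\ \big[Rmax/0]_(j <- s) F j = F i.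
Proof.
move=> H0; elim: s => // a s IH _.
rewrite big_cons; case: s IH => [|b s] IH.
  exists a; split; first by rewrite mem_seq1.
  by rewrite big_nil; apply Rmax_left; apply H0.
have [i [Hi ->]] := IH ltac:(discriminate).
apply: (Rmax_case (F a) (F i) (fun r => exists i0, i0 \in [:: a, b & s] /\ r = F i0)).
  by exists a; rewrite in_cons eqxx.
by exists i; rewrite in_cons Hi orbT.
Qed.

Lemma bplus_ge (I : eqType) (s : seq I) (F : I -> R) i :
  (forall j, 0 <= F j) -> i \in s -> F i <= \big[Rplus/0]_(j <- s) F j.
Proof.
move=> H0; elim: s => // a s IH; rewrite in_cons big_cons => /orP [/eqP ->|H].
  have : 0 <= \big[Rplus/0]_(j <- s) F j.
    elim: s {IH} => [|c s IH']; first by rewrite big_nil; apply Rle_refl.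
    rewrite big_cons; have := H0 c; lra.
  lra.
have := IH H; have := H0 a; lra.
Qed.

Lemma norm_inf_eq {m} (z : vec m) i :
  (forall j, Rabs (z j) <= z i) -> norm_inf z = z i.
Proof.
move=> H.
have Hi : 0 <= z i by eapply Rle_trans; [apply (Rabs_pos (z i)) | apply H].
apply Rle_antisym.
  by apply bmax_le.
rewrite -{1}(Rabs_pos_eq _ Hi).
by apply (bmax_ge _ _ (fun j => Rabs (z j)) i); rewrite mem_index_enum.
Qed.

Lemma d_coord {m} (x y : vec m) i : Rabs (x i - y i) <= d_inf x y.
Proof. by apply (bmax_ge _ _ (fun j => Rabs (x j - y j)) i); rewrite mem_index_enum. Qed.

Lemma d_ge0 {m} (x y : vec m) : 0 <= d_inf x y.
Proof. apply bmax_ge0. Qed.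

Lemma d_sym {m} (x y : vec m) : d_inf x y = d_inf y x.
Proof. rewrite /d_inf; apply eq_bigr => i _; apply Rabs_minus_sym. Qed.

Lemma d_tri {m} (x y z : vec m) : d_inf x z <= d_inf x y + d_inf y z.
Proof.
apply bmax_le.
  have := d_ge0 x y; have := d_ge0 y z; lra.
move=> i; have := d_coord x y i; have := d_coord y z i.
have := Rabs_triang (x i - y i) (y i - z i).
have -> : x i - y i + (y i - z i) = x i - z i by ring.
lra.
Qed.

Lemma d_arg {k} (x y : vec k.+1) : exists i, d_inf x y = Rabs (x i - y i).
Proof.
have Hne : index_enum 'I_k.+1 <> [::].
  by move=> E; have := mem_index_enum (@ord0 k); rewrite E.
have [i [_ Hi]] := bmax_arg _ (index_enum 'I_k.+1)
   (fun j => Rabs (x j - y j)) (fun j => Rabs_pos _) Hne.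
by exists i.
Qed.

Lemma d_refl {m} (x : vec m) : d_inf x x = 0.
Proof.
apply Rle_antisym; last by apply d_ge0.
apply bmax_le; first by apply Rle_refl.
move=> i; rewrite Rminus_diag Rabs_R0; apply Rle_refl.
Qed.

Lemma d_zero {m} (x y : vec m) : d_inf x y = 0 -> x = y.
Proof.
move=> H; apply functional_extensionality => i.
have := d_coord x y i; rewrite H => H1.
have := Rle_abs (x i - y i); have := Rle_abs (-(x i - y i)).
rewrite Rabs_Ropp; lra.
Qed.

Lemma sgnb_abs b : Rabs (sgnb b) = 1.
Proof. case: b => /=; [apply Rabs_R1 | rewrite Rabs_Ropp; apply Rabs_R1]. Qed.

Lemma sgnb_sq b : sgnb b * sgnb b = 1.
Proof. case: b => /=; ring. Qed.

Lemma d_shift {m} (p z : vec m) b :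
  d_inf p (fun j => p j + sgnb b * z j) = norm_inf z.
Proof.
rewrite /d_inf /norm_inf; apply eq_bigr => i _.
have -> : p i - (p i + sgnb b * z i) = - (sgnb b * z i) by ring.
by rewrite Rabs_Ropp Rabs_mult sgnb_abs Rmult_1_l.
Qed.

Lemma metric_sub m (P : vec m -> Prop) : is_metric (subspace P).
Proof.
split; [|split; [|split]].
- move=> x y; apply d_ge0.
- move=> [x hx] [y hy] /=; split.
    move=> H; move: (d_zero x y H) hy => <- hy; f_equal; apply proof_irrelevance.
  by case=> <-; apply d_refl.
- move=> x y; apply d_sym.
- move=> x y z; apply d_tri.
Qed.



Lemma surr_min {k} (X : vec k.+1 -> Prop) p (Hp : surrounding X p)
  (g : subspace X -> R) :
  (forall x x' : subspace X, g x + g x' >= Defs.dist x x') ->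
  (forall x : subspace X, g x <= d_inf p (proj1_sig x)) ->
  forall x : subspace X, g x = d_inf p (proj1_sig x).
Proof.
move=> Hg Hle [x hx]; apply Rle_antisym; first by apply (Hle (exist _ x hx)).
rewrite /=.
have [i Hi] := d_arg p x.
case: (Rle_dec (p i) (x i)) => Hc.
- have [z [Hz Hx']] := Hp i false.
  pose x' : subspace X := exist _ _ Hx'.
  have H1 : g (exist _ x hx) + g x' >= d_inf x (fun j => p j + sgnb false * z j)
    := Hg _ x'.
  have H2 : g x' <= norm_inf z by rewrite -(d_shift p z false); exact: Hle x'.
  have H3 := d_coord x (fun j => p j + sgnb false * z j) i.
  have H4 := Rle_abs (x i - (p i + sgnb false * z i)).
  rewrite /Lambda in Hz; rewrite /= in H1 H3 H4.
  have H5 : Rabs (p i - x i) <= x i - p i by apply Rabs_le; lra.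
  lra.
- have [z [Hz Hx']] := Hp i true.
  pose x' : subspace X := exist _ _ Hx'.
  have H1 : g (exist _ x hx) + g x' >= d_inf x (fun j => p j + sgnb true * z j)
    := Hg _ x'.
  have H2 : g x' <= norm_inf z by rewrite -(d_shift p z true); exact: Hle x'.
  have H3 := d_coord x (fun j => p j + sgnb true * z j) i.
  have H4 := Rle_abs (-(x i - (p i + sgnb true * z i))).
  rewrite Rabs_Ropp in H4.
  rewrite /Lambda in Hz; rewrite /= in H1 H3 H4.
  have H5 : Rabs (p i - x i) <= p i - x i by apply Rabs_le; lra.
  lra.
Qed.

Lemma surr_tight {k} (X : vec k.+1 -> Prop) p (Hp : surrounding X p)
  (Hb : exists M, forall x, X x -> Rabs (d_inf p x) <= M) :
  @in_tight_span (subspace X) (fun x => d_inf p (proj1_sig x)).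
Proof.
split.
  split.
    have [M HM] := Hb; exists M => [[x hx]]; exact: HM.
  move=> [x hx] [y hy] /=; apply Rle_ge.
  have := d_tri x p y; rewrite (d_sym x p); lra.
move=> g [_ Hg] Hle; exact: surr_min.
Qed.

Lemma surr_sup {k} (X : vec k.+1 -> Prop) p q
  (Hp : surrounding X p) (Hq : surrounding X q) :
  @sup_dist_is (subspace X) (fun x => d_inf p (proj1_sig x))
     (fun x => d_inf q (proj1_sig x)) (d_inf p q).
Proof.
split.
  move=> t [[x hx] ->] /=; apply Rabs_le.
  have := d_tri p q x; have := d_tri q p x; rewrite (d_sym q p); lra.
move=> b Hb.
have [i Hi] := d_arg p q.
case: (Rle_dec (p i) (q i)) => Hc.
- have [z [Hz Hx']] := Hp i false.
  have H1 : Rabs (norm_inf z - d_inf q (fun j => p j + sgnb false * z j)) <= b.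
    rewrite -(d_shift p z false); exact: (Hb _ (ex_intro _ (exist _ _ Hx') erefl)).
  have H3 := d_coord q (fun j => p j + sgnb false * z j) i.
  have H4 := Rle_abs (q i - (p i + sgnb false * z i)).
  have H6 := Rle_abs (-(norm_inf z - d_inf q (fun j => p j + sgnb false * z j))).
  rewrite Rabs_Ropp in H6.
  rewrite /Lambda in Hz; rewrite /= in H1 H3 H4 H6.
  have H5 : Rabs (p i - q i) <= q i - p i by apply Rabs_le; lra.
  lra.
- have [z [Hz Hx']] := Hq i false.
  have H1 : Rabs (d_inf p (fun j => q j + sgnb false * z j) - norm_inf z) <= b.
    rewrite -(d_shift q z false); exact: (Hb _ (ex_intro _ (exist _ _ Hx') erefl)).
  have H3 := d_coord p (fun j => q j + sgnb false * z j) i.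
  have H4 := Rle_abs (p i - (q i + sgnb false * z i)).
  have H6 := Rle_abs (d_inf p (fun j => q j + sgnb false * z j) - norm_inf z).
  rewrite /Lambda in Hz; rewrite /= in H1 H3 H4 H6.
  have H5 : Rabs (p i - q i) <= p i - q i by apply Rabs_le; lra.
  lra.
Qed.

Lemma embed_gen {k} (X : vec k.+1 -> Prop)
  (Hb : forall p, exists M, forall x, X x -> Rabs (d_inf p x) <= M) :
  embeds_in_tight_span (subspace X) (F_space X).
Proof.
exists (fun (y : F_space X) (x : subspace X) => d_inf (proj1_sig y) (proj1_sig x)).
split.
  move=> [y hy]; exact: surr_tight.
move=> [y hy] [y' hy']; exact: surr_sup.
Qed.



Lemma sq_nonneg (r : R) : 0 <= r * r.
Proof. nra. Qed.

Lemma coord_le1 {m} (x : vec m) j : cball x -> Rabs (x j) <= 1.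
Proof.
rewrite /cball /sqnorm2 => H.
have H1 : x j * x j <= \big[Rplus/0]_(i < m) (x i * x i) :=
  bplus_ge _ (index_enum 'I_m) (fun j => x j * x j) j
  (fun j => sq_nonneg (x j)) (mem_index_enum j).
apply Rabs_le; nra.
Qed.

Lemma coord_le_norm {m} (p : vec m) j : Rabs (p j) <= norm_inf p.
Proof. by apply (bmax_ge _ _ (fun j => Rabs (p j)) j); rewrite mem_index_enum. Qed.

Lemma bound_ball {m} (p : vec m) :
  exists M, forall x, cball x -> Rabs (d_inf p x) <= M.
Proof.
exists (norm_inf p + 1) => x Hx.
rewrite Rabs_pos_eq; last by apply d_ge0.
apply bmax_le.
  have : 0 <= norm_inf p := bmax_ge0 _ _ _.
  lra.
move=> j; have := Rabs_triang (p j) (- x j); rewrite Rabs_Ropp.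
have := coord_le1 x j Hx; have := coord_le_norm p j.
have -> : p j + - x j = p j - x j by ring.
lra.
Qed.

Lemma sphere_ball {m} (x : vec m) : sphere x -> cball x.
Proof. rewrite /sphere /cball => ->; apply Rle_refl. Qed.

Lemma bound_sphere {m} (p : vec m) :
  exists M, forall x, sphere x -> Rabs (d_inf p x) <= M.
Proof.
have [M HM] := bound_ball p; exists M => x Hx; apply HM, sphere_ball, Hx.
Qed.

Lemma ball_surr {m} (p : vec m) : cball p -> surrounding (@sphere m) p.
Proof.
move=> Hp i xi.
pose S := \big[Rplus/0]_(j < m | j != i) (p j * p j).
have HS : sqnorm2 p = p i * p i + S by rewrite /sqnorm2 (bigD1 i).
rewrite /cball HS in Hp.
have Hpi2 := sq_nonneg (p i).
pose s := sqrt (1 - S).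
have Hs : s * s = 1 - S by apply sqrt_sqrt; lra.
have Hpi : Rabs (p i) <= s.
  rewrite -sqrt_Rsqr_abs; apply sqrt_le_1_alt; rewrite /Rsqr; lra.
pose t := s - sgnb xi * p i.
have Ht : 0 <= t.
  rewrite /t; case: (xi) => /=.
    have := Rle_abs (p i); lra.
  have := Rle_abs (- p i); rewrite Rabs_Ropp; lra.
exists (fun j => if j == i then t else 0); split.
  rewrite /Lambda; symmetry; apply (norm_inf_eq (fun j => if j == i then t else 0) i) => j.
  rewrite eqxx; case: eqP => _.
    rewrite Rabs_pos_eq //; apply Rle_refl.
  by rewrite Rabs_R0.
rewrite /sphere /sqnorm2 (bigD1 i) //= eqxx.
have -> : \big[Rplus/0]_(j < m | j != i)
   ((p j + sgnb xi * (if j == i then t else 0)) *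
    (p j + sgnb xi * (if j == i then t else 0))) = S.
  rewrite /S; apply eq_bigr => j /negbTE ->; ring.
have -> : p i + sgnb xi * t = sgnb xi * s.
  rewrite /t.
  have -> : p i + sgnb xi * (s - sgnb xi * p i) =
            sgnb xi * s + (1 - sgnb xi * sgnb xi) * p i by ring.
  rewrite sgnb_sq; ring.
have -> : sgnb xi * s * (sgnb xi * s) = (sgnb xi * sgnb xi) * (s * s) by ring.
rewrite sgnb_sq Hs; ring.
Qed.



Lemma sum_supp m (F : 'I_m -> R) (s : seq 'I_m) :
  uniq s -> (forall j, j \notin s -> F j = 0) ->
  \big[Rplus/0]_(j < m) F j = \big[Rplus/0]_(j <- s) F j.
Proof.
move=> Hu H0.
rewrite (big_uniq _ Hu) (bigID (fun j => j \in s)) /=.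
rewrite [X in _ + X]big1; last by move=> j /H0.
by rewrite Rplus_0_r.
Qed.

Lemma sum3 (n : nat) (hn : (2 <= n)%nat) (G : nat -> R) :
  (forall k, (3 <= k)%nat -> G k = 0) ->
  \big[Rplus/0]_(j < n.+1) G j = G 0%nat + G 1%nat + G 2%nat.
Proof.
move=> H0.
have h0 : (0 < n.+1)%nat by [].
have h1 : (1 < n.+1)%nat by rewrite ltnS; exact: ltnW hn.
have h2 : (2 < n.+1)%nat by rewrite ltnS.
rewrite (sum_supp _ _ [:: inord 0; inord 1; inord 2]).
- rewrite !big_cons big_nil !inordK //; ring.
- by rewrite -(map_inj_uniq val_inj) /= !inordK.
- move=> j; rewrite -(mem_map val_inj) /= !inordK // !inE.
  move=> Hj; apply H0; move: Hj; case: (nat_of_ord j) => [|[|[|k]]] //.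
Qed.

Lemma sum4 (n : nat) (hn : (2 <= n)%nat) (G : nat -> R) (i : 'I_n.+1) :
  (3 <= i)%nat ->
  (forall k, (3 <= k)%nat -> k != i -> G k = 0) ->
  \big[Rplus/0]_(j < n.+1) G j = G 0%nat + G 1%nat + G 2%nat + G i.
Proof.
move=> Hi H0.
have h0 : (0 < n.+1)%nat by [].
have h1 : (1 < n.+1)%nat by rewrite ltnS; exact: ltnW hn.
have h2 : (2 < n.+1)%nat by rewrite ltnS.
rewrite (sum_supp _ _ [:: inord 0; inord 1; inord 2; i]).
- rewrite !big_cons big_nil !inordK //; ring.
- rewrite -(map_inj_uniq val_inj) /= !inordK //.
  move: Hi; case: (nat_of_ord i) => [|[|[|k]]] //.
- move=> j; rewrite -(mem_map val_inj) /= !inordK // !inE.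
  move=> Hj; apply H0; move: Hj; case: (nat_of_ord j) => [|[|[|k]]] //.
Qed.



Definition qv (m : nat) : vec m := fun j => if (nat_of_ord j < 3)%nat then 3/5 else 0.

Lemma q_not_ball (n : nat) (hn : (2 <= n)%nat) : ~ cball (qv n.+1).
Proof.
rewrite /cball /sqnorm2 /qv.
rewrite (sum3 n hn (fun k => (if (k < 3)%nat then 3/5 else 0) * (if (k < 3)%nat then 3/5 else 0))) /=.
  lra.
by move=> k hk; rewrite ltnNge hk /=; ring.
Qed.

Lemma witness {m} (p x : vec m) i xi : sphere x ->
  (forall j, Rabs (x j - p j) <= sgnb xi * (x i - p i)) ->
  exists z, Lambda i z /\ sphere (fun j => p j + sgnb xi * z j).
Proof.
move=> Hx H.
exists (fun j => sgnb xi * (x j - p j)); split.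
  rewrite /Lambda; symmetry.
  apply (norm_inf_eq (fun j => sgnb xi * (x j - p j)) i) => j.
  rewrite Rabs_mult sgnb_abs Rmult_1_l; apply H.
have -> : (fun j => p j + sgnb xi * (sgnb xi * (x j - p j))) = x.
  apply functional_extensionality => j.
  rewrite -Rmult_assoc sgnb_sq; ring.
exact Hx.
Qed.

Lemma q_surr (n : nat) (hn : (2 <= n)%nat) : surrounding (@sphere n.+1) (qv n.+1).
Proof.
move=> i xi.
case: (ltnP i 3) => Hi.
- case: xi.
  + apply (witness _ (fun j => if (nat_of_ord j == nat_of_ord i) then 7/9
                                  else if (nat_of_ord j < 3)%nat then 4/9 else 0)).
    * rewrite /sphere /sqnorm2.
      rewrite (sum3 n hn (fun k =>
        (if (k == nat_of_ord i) then 7/9 else if (k < 3)%nat then 4/9 else 0) *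
        (if (k == nat_of_ord i) then 7/9 else if (k < 3)%nat then 4/9 else 0))).
        move: Hi; case: (nat_of_ord i) => [|[|[|k]]] //= _; lra.
      move=> k hk; rewrite ltnNge hk /=.
      case: eqP => [E|_]; last by ring.
      by move: Hi; rewrite -E ltnNge hk.
    * move=> j; rewrite /qv eqxx Hi /=.
      case: eqP => [->|_]; first by rewrite Hi; apply Rabs_le; lra.
      case: ltnP => _; apply Rabs_le; lra.
  + apply (witness _ (fun j => if (nat_of_ord j == nat_of_ord i) then 1/3
                                  else if (nat_of_ord j < 3)%nat then 2/3 else 0)).
    * rewrite /sphere /sqnorm2.
      rewrite (sum3 n hn (fun k =>
        (if (k == nat_of_ord i) then 1/3 else if (k < 3)%nat then 2/3 else 0) *
        (if (k == nat_of_ord i) then 1/3 else if (k < 3)%nat then 2/3 else 0))).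
        move: Hi; case: (nat_of_ord i) => [|[|[|k]]] //= _; lra.
      move=> k hk; rewrite ltnNge hk /=.
      case: eqP => [E|_]; last by ring.
      by move: Hi; rewrite -E ltnNge hk.
    * move=> j; rewrite /qv eqxx Hi /=.
      case: eqP => [->|_]; first by rewrite Hi; apply Rabs_le; lra.
      case: ltnP => _; apply Rabs_le; lra.
- apply (witness _ (fun j => if (nat_of_ord j == nat_of_ord i) then sgnb xi / 2
                                else if (nat_of_ord j < 3)%nat then 1/2 else 0)).
  * rewrite /sphere /sqnorm2.
    rewrite (sum4 n hn (fun k =>
      (if (k == nat_of_ord i) then sgnb xi / 2 else if (k < 3)%nat then 1/2 else 0) *
      (if (k == nat_of_ord i) then sgnb xi / 2 else if (k < 3)%nat then 1/2 else 0)) i Hi).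
      rewrite eqxx.
      move: Hi; case: (nat_of_ord i) => [|[|[|k]]] //= _.
      have := sgnb_sq xi; lra.
    move=> k hk /negbTE ->; rewrite ltnNge hk /=; ring.
  * move=> j; rewrite /qv eqxx.
    have -> : (nat_of_ord i < 3)%nat = false by rewrite ltnNge Hi.
    have Hs : sgnb xi * (sgnb xi / 2 - 0) = 1/2.
      have := sgnb_sq xi; lra.
    rewrite Hs.
    case: eqP => [->|_].
      have -> : (nat_of_ord i < 3)%nat = false by rewrite ltnNge Hi.
      rewrite Rminus_0_r Rabs_mult sgnb_abs (Rabs_pos_eq (/2)); lra.
    case: ltnP => _; apply Rabs_le; lra.
Qed.



Local Close Scope R_scope.
Theorem theorem5p9 (n : nat) (hn : (2 <= n)%N) :
  (* (i) *)
  (embeds_in_tight_span (S_inf n) (F_space (@sphere n.+1)) /\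
   strict_subset_of (@cball n.+1) (surrounding (@sphere n.+1))) /\
  (* (ii) *)
  (embeds_in_tight_span (D_inf n) (F_space (@cball n.+1)) /\
   subset_of (surrounding (@sphere n.+1)) (surrounding (@cball n.+1)) /\
   strict_subset_of (@cball n.+1) (surrounding (@sphere n.+1))) /\
  (* consequence *)
  ~ injective_space (D_inf n).
Proof.
have Hq_surr := q_surr n hn.
have Hq_nb := q_not_ball n hn.
have Hsub : subset_of (surrounding (@sphere n.+1)) (surrounding (@cball n.+1)).
  move=> p Hp i xi; have [z [Hz Hs]] := Hp i xi; exists z; split => //.
  exact: sphere_ball.
have Hstrict : strict_subset_of (@cball n.+1) (surrounding (@sphere n.+1)).
  split; first by move=> p; apply ball_surr.
  by exists (qv n.+1).
split; first split => //.
  exact: (embed_gen (@sphere n.+1) (@bound_sphere n.+1)).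
split; first split => //.
  exact: (embed_gen (@cball n.+1) (@bound_ball n.+1)).
move=> Hinj.
pose P := fun x : vec n.+1 => cball x \/ x = qv n.+1.
pose e : D_inf n -> subspace P :=
  fun a => exist P (proj1_sig a) (or_introl (proj2_sig a)).
have [ft [Hlip Hext]] := Hinj (D_inf n) (subspace P) (metric_sub _ _) (metric_sub _ _)
   e (fun a a' => erefl) (fun a : D_inf n => a) (fun a a' => Rle_refl _).
pose qq : subspace P := exist P (qv n.+1) (or_intror erefl).
pose y := ft qq.
have Hle : forall x : subspace (@cball n.+1),
    (d_inf (proj1_sig y) (proj1_sig x) <= d_inf (qv n.+1) (proj1_sig x))%R.
  move=> x; have := Hlip qq (e x); rewrite Hext; exact.
have Hg : forall x x' : subspace (@cball n.+1),
    (d_inf (proj1_sig y) (proj1_sig x) + d_inf (proj1_sig y) (proj1_sig x')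
      >= Defs.dist x x')%R.
  move=> x x' /=; apply Rle_ge.
  have := d_tri (proj1_sig x) (proj1_sig y) (proj1_sig x').
  rewrite (d_sym (proj1_sig x) (proj1_sig y)); lra.
have Heq := surr_min (@cball n.+1) (qv n.+1) (Hsub _ Hq_surr)
  (fun x => d_inf (proj1_sig y) (proj1_sig x)) Hg Hle y.
rewrite /= d_refl in Heq.
have E := d_zero _ _ (esym Heq).
apply Hq_nb; rewrite E; exact: (proj2_sig y).
Qed.
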